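(* In the setting of the context, the four functions $u=H_{2n}$, $v=H_{2n+1}$, $f=S^{[1]}_{2n}$, $g=S^{[1]}_{2n+1}$ satisfy the following three systems of nonlinear difference equations. (1) For the shifts $\hat{}\,$, $\tilde{}\,$, $\bar{}\,$: \begin{align*} g(\tilde{f}-\hat{f})+\tilde{g}(\tilde{\hat{f}}-\tilde{f})+\hat{g}(\hat{f}-\hat{\tilde{f}})&=\frac{1}{\tilde{d}}\left(\frac{\hat{\bar {u}}}{\hat{\tilde{u}}}-\frac{\bar {u}}{\tilde{u}}\right)+\frac{1}{\hat{d}}\left(\frac{\bar {u}}{\hat{u}}-\frac{\tilde{\bar {u}}}{\tilde{\hat{u}}}\right),\\ \bar {f}(\hat{g}-\tilde{g})+\tilde{\bar{f}}(\tilde{g}-\tilde{\hat{g}})+\hat{\bar {f}}(\hat{\tilde{g}}-\hat{g})&= \frac{1}{\tilde{d}}\left(\frac{\bar {v}}{\tilde{v}}-\frac{\hat{\bar {v}}}{\hat{\tilde{v}}}\right),\\ \frac{1}{\tilde{d}}\frac{\hat{\bar {u}}}{\hat{\tilde{u}}}(\hat{\bar {f}}-\bar {f})+\frac{1}{\hat{d}}\frac{\tilde{\bar {u}}}{\tilde{\hat{u}}}(\bar {f}-\tilde{\bar {f}})+\frac{1}{\tilde{d}}\frac{\bar {v}}{\tilde{v}}(\tilde{f}-\tilde{\hat{f}})&=0,\\ \frac{1}{\hat{d}}\frac{\bar {\bar {u}}}{\hat{\bar {u}}}(\hat{g}-\hat{\tilde{g}})+\frac{1}{\tilde{d}}\frac{\bar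 {\bar {u}}}{\tilde{\bar {u}}}(\tilde{\hat{g}}-\tilde{g})+\frac{1}{\tilde{d}}\frac{\hat{\bar {v}}}{\hat{\tilde{v}}}(\bar {g}-\hat{\bar {g}})&=0. \end{align*} (2) For the shifts $\check{}\,$, $\tilde{}\,$, $\bar{}\,$: \begin{align*} g(\tilde{f}-\check{f})+\tilde{g}(\check{\tilde{f}}-\tilde{f})+\check{g}(\check{f}-\check{\tilde{f}})&=\frac{1}{\tilde{d}}\left(\frac{\check{\bar {u}}}{\check{\tilde{u}}}-\frac{\bar {u}}{\tilde{u}}\right),\\ \bar {f}(\tilde{g}-\check{g})+\tilde{\bar {f}}(\tilde{\check{g}}-\tilde{g})+\check{\bar {f}}(\check{g}-\check{\tilde{g}})&= \frac{1}{\tilde{d}}\left(\frac{\check{\bar {v}}}{\check{\tilde{v}}}-\frac{\bar {v}}{\tilde{v}}\right)+\frac{1}{\check{d}}\left(\frac{\bar {v}}{\check{v}}-\frac{\tilde{\bar {v}}}{\check{\tilde{v}}}\right),\\ \frac{1}{\tilde{d}}\frac{\check{\bar {u}}}{\check{\tilde{u}}}(\bar {f}-\check{\bar {f}})+\frac{1}{\check{d}}\frac{\bar {v}}{\check{v}}(\check{f}-\check{\tilde{f}})+\frac{1}{\tilde{d}}\frac{\bar {v}}{\tilde{v}}(\tilde{\check{f}}-\tilde{f})&=0,\\ \frac{1}{\tilde{d}}\frac{\bar {\bar {u}}}{\tilde{\bar {u}}}(\tilde{g}-\tilde{\check{g}}) +\frac{1}{\check{d}}\frac{\tilde{\bar {v}}}{\tilde{\check{v}}}(\bar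 {g}-\tilde{\bar {g}})+\frac{1}{\tilde{d}}\frac{\check{\bar {v}}}{\check{\tilde{v}}}(\check{\bar {g}}-\bar {g})&=0. \end{align*} (3) For the shifts $\hat{}\,$, $\check{}\,$, $\bar{}\,$: \begin{align*} \frac{1}{\hat d}\frac{\check{\bar {u}}}{\check{\hat{u}}}(\bar {f}-\check{\bar {f}})+\frac{1}{\check d}\frac{\bar {v}}{\check{v}}(\check{f}-\check{\hat{f}})&=0,\\ \frac{1}{\hat d}\frac{\bar {\bar {u}}}{\hat{\bar {u}}}(\hat{\check{g}}-\hat{g})+\frac{1}{\check d}\frac{\hat{\bar {v}}}{\check{\hat{v}}}(\hat{\bar {g}}-\bar {g})&= 0,\\ g(\check{f}-\hat{f})+\check{g}(\check{\hat{f}}-\check{f})+\hat{g}(\hat{f}-\check{\hat{f}})&=\frac{1}{\hat{d}}\left(\frac{\bar {u}}{\hat{u}}-\frac{\check{\bar {u}}}{\hat{\check{u}}}\right),\\ \bar {f}(\check{g}-\hat{g})+\check{\bar {f}}(\check{\hat{g}}-{\check{g}})+\hat{\bar {f}}(\hat{g}-\check{\hat{g}})&=\frac{1}{\check{d}}\left(\frac{\hat{\bar {v}}}{\check{\hat{v}}}-\frac{\bar {v}}{\check{v}}\right). \end{align*}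
   Context: Fix $N,M^{(1)},M^{(2)}\in\mathbb N_0$, parameters $b^{(a)}_i$ ($a\in\{1,2\}$, $1\le i\le M^{(a)}$), $c_j$ ($1\le j\le N$), $\eta^{(1)},\eta^{(2)}$, and hypergeometric weights on $\mathbb N_0$: $w^{(a)}(k)=\frac{(b^{(a)}_1)_k\cdots(b^{(a)}_{M^{(a)}})_k}{(c_1)_k\cdots(c_N)_k}\frac{(\eta^{(a)})^k}{k!}$, with $(b)_k$ the Pochhammer symbol. The moment matrix $\mathscr M$ (indices from $0$) has entries $\mathscr M_{n,2m}=\sum_{k\ge0}k^{n+m}w^{(1)}(k)$, $\mathscr M_{n,2m+1}=\sum_{k\ge0}k^{n+m}w^{(2)}(k)$. It is assumed that for all parameter values considered (including the shifted ones below) the series converge and all leading principal minors $\tau_n$ of $\mathscr M$ are nonzero, so that $\mathscr M=S^{-1}H\tilde S^{-\top}$ with $S,\tilde S$ lower unitriangular semi-infinite matrices and $H=\operatorname{diag}(H_0,H_1,\dots)$. Write $S=I+\Lambda^\top S^{[1]}+(\Lambda^\top)^2S^{[2]}+\cdots$ with $\Lambda$ the shift matrix (ones on the first superdiagonal) and $S^{[k]}=\operatorname{diag}(S^{[k]}_0,S^{[k]}_1,\dots)$; thus $S^{[1]}_n$ is the coefficient of $x^{n}$ in the monic type II multiple orthogonal polynomial $B_{n+1}$ given by the entries of $SX(x)$, $X(x)=(1,x,x^2,\dots)^\top$. Shift notation for a function $u$ of $n$ and the parameters: $\hat u$ is $u$ with one fixed parameter $b^{(1)}_r$ replaced by $b^{(1)}_r+1$,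 and $\hat d:=b^{(1)}_r$; $\check u$ is $u$ with one fixed parameter $b^{(2)}_q$ replaced by $b^{(2)}_q+1$, and $\check d:=b^{(2)}_q$; $\tilde u$ is $u$ with one fixed parameter $c_s$ replaced by $c_s-1$, and $\tilde d:=c_s-1$; $\bar u$ is $u$ with $n$ replaced by $n+2$. Combined symbols denote the composition of the corresponding shifts. *)

(* Defs.v *)
From HB Require Import structures.
From mathcomp Require Import all_boot all_order all_algebra.
From mathcomp Require Import all_classical all_reals.
From mathcomp Require Import topology normedtype sequences.
Set Implicit Arguments. Unset Strict Implicit. Unset Printing Implicit Defensive.
Import Order.TTheory GRing.Theory Num.Theory.
Import numFieldNormedType.Exports.
Local Open Scope ring_scope.

Section Defs.
Variable K : numFieldType.

Definition poch (b : K) (k : nat) : K := \prod_(i < k) (b + i%:R).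

Definition hweight (Mb N : nat) (b : 'I_Mb -> K) (c : 'I_N -> K) (eta : K)
  (k : nat) : K :=
  (\prod_(i < Mb) poch (b i) k) / (\prod_(j < N) poch (c j) k)
  * eta ^+ k / (k`!)%:R.

Definition msummand (w : nat -> K) (p : nat) : nat -> K :=
  fun k => (k%:R) ^+ p * w k.
Definition moment (w : nat -> K) (p : nat) : K := limn (series (msummand w p)).

Definition momMat (w1 w2 : nat -> K) (n j : nat) : K :=
  if odd j then moment w2 (n + j./2) else moment w1 (n + j./2).

Definition tau (Mm : nat -> nat -> K) (n : nat) : K :=
  \det (\matrix_(i < n, j < n) Mm i j).

(* Gauss-Borel factorization  M = S^{-1} H St^{-T}  with S, St lower
   unitriangular semi-infinite and H = diag(H_0, H_1, ...), written in the
   equivalent form  S M St^T = H  (all products are finite sums since S, St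
   are lower triangular). *)
Definition lower_unitri (A : nat -> nat -> K) : Prop :=
  (forall i, A i i = 1) /\ (forall i j, (i < j)%N -> A i j = 0).

Definition GaussBorel (Mm : nat -> nat -> K) (S : nat -> nat -> K)
  (H : nat -> K) (St : nat -> nat -> K) : Prop :=
  [/\ lower_unitri S, lower_unitri St &
   forall i j, \sum_(l < j.+1) (\sum_(k < i.+1) S i k * Mm k l) * St j l
               = if i == j then H i else 0].

Definition shift_up (m : nat) (b : 'I_m -> K) (r : 'I_m) : 'I_m -> K :=
  fun i => if i == r then b i + 1 else b i.
Definition shift_down (m : nat) (c : 'I_m -> K) (s : 'I_m) : 'I_m -> K :=
  fun j => if j == s then c j - 1 else c j.

Definition admissible (N M1 M2 : nat) (b1 : 'I_M1 -> K) (b2 : 'I_M2 -> K)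
  (c : 'I_N -> K) (eta1 eta2 : K) : Prop :=
  [/\ forall j k, poch (c j) k != 0,
      forall p, cvgn (series (msummand (hweight b1 c eta1) p)),
      forall p, cvgn (series (msummand (hweight b2 c eta2) p)) &
      forall n, tau (momMat (hweight b1 c eta1) (hweight b2 c eta2)) n != 0].

End Defs.

(* Main.v *)
Require Import Defs.
From HB Require Import structures.
From mathcomp Require Import all_boot all_order all_algebra.
From mathcomp Require Import all_classical all_reals.
From mathcomp Require Import topology normedtype sequences.
From mathcomp Require Import ring.
From mathcomp Require Import zify.
Set Implicit Arguments. Unset Strict Implicit. Unset Printing Implicit Defensive.
Import Order.TTheory GRing.Theory Num.Theory.
Import numFieldNormedType.Exports.
Local Open Scope ring_scope.

Section Alg.
Variable K : numFieldType.

Definition Orth (M S : nat -> nat -> K) (H : nat -> K) : Prop :=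
  lower_unitri S /\ forall i j, (j <= i)%N ->
    \sum_(k < i.+1) S i k * M k j = if i == j then H i else 0.

Lemma GB_orth M S H St : GaussBorel M S H St -> Orth M S H.
Proof.
case=> LS [St1 St0] GB; split=> // i j.
pose a l := \sum_(k < i.+1) S i k * M k l.
rewrite -/(a j).
have GB' : forall J, \sum_(l < J.+1) a l * St J l = if i == J then H i else 0 := fun J => GB i J.
elim: j {-2}j (leqnn j) => [|J IH] j hj hji.
  have := GB' 0%N; rewrite big_ord_recr big_ord0 /= St1 add0r mulr1.
  by move: hj; rewrite leqn0 => /eqP ->.
have [hjJ|] := leqP j J; first exact: IH.
move=> hJj; have ej : j = J.+1 by apply/eqP; rewrite eqn_leq hj.
subst j.
have := GB' J.+1; rewrite big_ord_recr /= St1 mulr1 => <-.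
rewrite big1 ?add0r // => l _.
have hl : (l <= J)%N by rewrite -ltnS.
rewrite IH //; last by apply: leq_trans hl (ltnW hji).
by rewrite (_ : (i == l) = false) ?mul0r //; apply/negbTE; rewrite neq_ltn (leq_ltn_trans hl hji) orbT.
Qed.

Lemma uniq_zero (p : nat) (M : nat -> nat -> K) (c : nat -> K) :
  tau M p != 0 -> (forall l, (l < p)%N -> \sum_(k < p) c k * M k l = 0) ->
  forall k, (k < p)%N -> c k = 0.
Proof.
move=> hdet horth k hk.
pose A := \matrix_(i < p, j < p) M i j.
pose v := \row_(j < p) c j.
have hA : A \in unitmx by rewrite unitmxE unitfE.
have hv : v *m A = 0.
  apply/matrixP=> i j; rewrite !mxE -[RHS](horth j (ltn_ord j)).
  by apply: eq_bigr => l _; rewrite !mxE.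
have : v = 0 by rewrite -(mulmxK hA v) hv mul0mx.
move/matrixP/(_ 0 (Ordinal hk)); rewrite !mxE //.
Qed.

Lemma H_nz M S H : Orth M S H -> (forall p, tau M p != 0) -> forall i, H i != 0.
Proof.
move=> [[S1 S0] hO] ht i; apply/negP => /eqP hH.
have := @uniq_zero i.+1 M (S i) (ht _) _ i (ltnSn i).
rewrite S1 => h; have : (1 : K) = 0 by apply: h => l hl; rewrite hO //; case: eqP => // ->.
by move/eqP; rewrite oner_eq0.
Qed.

Lemma sum_widen (S : nat -> K) (a : nat -> K) p B :
  (p <= B)%N -> (forall k, (p <= k)%N -> S k = 0) ->
  \sum_(k < p) S k * a k = \sum_(k < B) S k * a k.
Proof.
move=> hB h0; rewrite (big_ord_widen B (fun k => S k * a k) hB) big_mkcond /=.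
apply: eq_bigr => k _; case: ifP => // /negbT; rewrite -leqNgt => /h0 ->.
by rewrite mul0r.
Qed.

Definition xd (A B : nat -> nat -> K) m := A m m.-1 - B m m.-1.
Definition crel (A B : nat -> nat -> K) (y : nat -> K) m :=
  forall j, A m j = B m j + xd A B m * B m.-1 j + y m * B m.-2 j.

Lemma geronimus M M' S S' H H' (e : nat -> K) :
  Orth M S H -> Orth M' S' H' -> (forall p, tau M' p != 0) ->
  (forall k j, M' k j = M k j + e j * M k j.+2) ->
  forall m, crel S S' (fun m => e m.-2 * (H m / H' m.-2)) m.+2.
Proof.
move=> OS OS' ht hM m.
have hH' := H_nz OS' ht.
case: OS => [[S1 S0] hO]; case: OS' => [[S1' S0'] hO'].
rewrite /=.
set x := xd S S' m.+2; set y := e m * (H m.+2 / H' m).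
pose D j := S m.+2 j - (S' m.+2 j + x * S' m.+1 j + y * S' m j).
suff hD : forall j, D j = 0 by move=> j; apply/eqP; rewrite -subr_eq0; apply/eqP; exact: hD.
have hDhi : forall j, (m < j)%N -> D j = 0.
  move=> j hj; rewrite /D /x /xd /=.
  have [->|hne] := eqVneq j m.+1.
    by rewrite S1' (S0' m) // mulr0 addr0 mulr1; ring.
  have [->|hne2] := eqVneq j m.+2.
    by rewrite S1 S1' (S0' m.+1) // (S0' m) // !mulr0 !addr0 subrr.
  have hj3 : (m.+2 < j)%N by lia.
  by rewrite S0 // S0' // (S0' m.+1) ?(S0' m) ?mulr0 ?addr0 ?subrr //; lia.
move=> j; have [hj|hj] := leqP j m; last exact: hDhi.
apply: (@uniq_zero m.+1 M' D (ht _)) => // l hl.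
rewrite (@sum_widen D (M'^~ l) m.+1 m.+3); [|lia|by move=> k hk; apply: hDhi].
have wid : forall (A : nat -> nat -> K) i, lower_unitri A -> (i < m.+3)%N -> forall a : nat -> K,
    \sum_(k < m.+3) A i k * a k = \sum_(k < i.+1) A i k * a k.
  move=> A i [_ A0] hi a; symmetry; apply: sum_widen => // k hk; apply: A0; lia.
have LS : lower_unitri S by [].
have LS' : lower_unitri S' by [].
have w1 : (m < m.+3)%N by lia.
have w2 : (m.+1 < m.+3)%N by lia.
have w3 : (m.+2 < m.+3)%N by lia.
have lin : \sum_(k < m.+3) D k * M' k l = \sum_(k < m.+3) S m.+2 k * M' k l -
   (\sum_(k < m.+3) S' m.+2 k * M' k l + x * \sum_(k < m.+3) S' m.+1 k * M' k l
    + y * \sum_(k < m.+3) S' m k * M' k l).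
  rewrite !mulr_sumr -!big_split -sumrB; apply: eq_bigr => k _; rewrite /D /=; ring.
have E0 : \sum_(k < m.+3) S m.+2 k * M' k l = H m.+2 * (if m == l then e l else 0).
  under eq_bigr => k _ do rewrite hM mulrDr (mulrC (e l)) mulrA.
  rewrite big_split /= -mulr_suml.
  rewrite (wid S (m.+2) LS w3 (fun k => M k l)) (wid S (m.+2) LS w3 (fun k => M k l.+2)).
  rewrite hO; last lia.
  rewrite hO; last lia.
  rewrite (_ : (m.+2 == l) = false); last by apply/negbTE; lia.
  rewrite eqSS eqSS add0r; case: eqP => _; [by rewrite mulrC| by rewrite mul0r mulr0].
have E1 : \sum_(k < m.+3) S' m.+2 k * M' k l = 0.
  rewrite (wid S' (m.+2) LS' w3 (fun k => M' k l)) hO'; last lia.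
  by rewrite (_ : (m.+2 == l) = false) //; apply/negbTE; lia.
have E2 : \sum_(k < m.+3) S' m.+1 k * M' k l = 0.
  rewrite (wid S' (m.+1) LS' w2 (fun k => M' k l)) hO'; last lia.
  by rewrite (_ : (m.+1 == l) = false) //; apply/negbTE; lia.
have E3 : \sum_(k < m.+3) S' m k * M' k l = if m == l then H' m else 0.
  by rewrite (wid S' m LS' w1 (fun k => M' k l)) hO'; last lia.
rewrite lin E0 E1 E2 E3 /y; case: eqP => [<-|_]; last by rewrite !mulr0 !addr0 subr0.
rewrite !mulr0 !add0r mulrC -!mulrA mulVf // mulr1 subrr //.
Qed.

End Alg.

Section Comb.
Variable K : numFieldType.

Lemma by_diff (a b c d : K) : a - b = 0 -> c - d = a - b -> c = d.
Proof. by move=> E1 E2; apply/eqP; rewrite -subr_eq0 E2 E1. Qed.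

Lemma by_diff2 (a b a' b' c d u : K) : a - b = 0 -> a' - b' = 0 ->
  c - d = a - b + u * (a' - b') -> c = d.
Proof. by move=> E1 E2 E3; apply/eqP; rewrite -subr_eq0 E3 E1 E2 mulr0 addr0. Qed.

Lemma k2 (P Q Q' R : nat -> nat -> K) (y1 y2 y3 y4 : nat -> K) m :
  lower_unitri Q -> lower_unitri Q' -> lower_unitri R ->
  crel P Q y1 m.+2 -> crel Q R y2 m.+2 -> crel P Q' y3 m.+2 -> crel Q' R y4 m.+2 ->
  y1 m.+2 + xd P Q m.+2 * xd Q R m.+1 + y2 m.+2
  = y3 m.+2 + xd P Q' m.+2 * xd Q' R m.+1 + y4 m.+2.
Proof.
move=> [Q1 _] [Q1' _] [R1 _] h1 h2 h3 h4.
have e1 := h1 m; have e2 := h2 m; have e3 := h3 m; have e4 := h4 m.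
rewrite /xd /= in e1 e2 e3 e4 *.
rewrite Q1 Q1' R1 in e1 e2 e3 e4.
have E : (Q m.+2 m + (P m.+2 m.+1 - Q m.+2 m.+1) * Q m.+1 m + y1 m.+2 * 1)
       - (Q' m.+2 m + (P m.+2 m.+1 - Q' m.+2 m.+1) * Q' m.+1 m + y3 m.+2 * 1) = 0.
  by rewrite -e1 -e3 subrr.
rewrite e2 e4 in E.
apply: (by_diff E); ring.
Qed.

Lemma k3 (P Q Q' R : nat -> nat -> K) (y1 y2 y3 y4 : nat -> K) m :
  lower_unitri Q -> lower_unitri Q' -> lower_unitri R ->
  crel P Q y1 m.+3 -> crel Q R y2 m.+3 -> crel P Q' y3 m.+3 -> crel Q' R y4 m.+3 ->
  crel Q R y2 m.+2 -> crel Q' R y4 m.+2 ->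
  xd P Q m.+3 * y2 m.+2 + y1 m.+3 * xd Q R m.+1
  = xd P Q' m.+3 * y4 m.+2 + y3 m.+3 * xd Q' R m.+1.
Proof.
move=> LQ LQ' LR h1 h2 h3 h4 h2' h4'.
have K2 := k2 LQ LQ' LR h1 h2 h3 h4.
case: LQ LQ' LR => [Q1 _] [Q1' _] [R1 _].
have e1 := h1 m; have e2 := h2 m; have e3 := h3 m; have e4 := h4 m.
have e2' := h2' m; have e4' := h4' m.
rewrite /xd /= in e1 e2 e3 e4 e2' e4' K2 *.
rewrite ?Q1 ?Q1' ?R1 in e1 e2 e3 e4 e2' e4'.
have E : (Q m.+3 m + (P m.+3 m.+2 - Q m.+3 m.+2) * Q m.+2 m + y1 m.+3 * Q m.+1 m)
       - (Q' m.+3 m + (P m.+3 m.+2 - Q' m.+3 m.+2) * Q' m.+2 m + y3 m.+3 * Q' m.+1 m) = 0.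
  by rewrite -e1 -e3 subrr.
rewrite e2 e4 e2' e4' in E.
have E2 : (y1 m.+3 + (P m.+3 m.+2 - Q m.+3 m.+2) * (Q m.+2 m.+1 - R m.+2 m.+1) + y2 m.+3)
  - (y3 m.+3 + (P m.+3 m.+2 - Q' m.+3 m.+2) * (Q' m.+2 m.+1 - R m.+2 m.+1) + y4 m.+3) = 0.
  by rewrite K2 subrr.
apply: (by_diff2 (u := - R m.+1 m) E E2); ring.
Qed.

End Comb.

Section Wt.
Variable K : numFieldType.

Lemma poch_shift (b : K) k : b * poch (b + 1) k = poch b k * (b + k%:R).
Proof.
have h1 : poch b k.+1 = b * poch (b + 1) k.
  rewrite /poch big_ord_recl /= addr0; congr (_ * _); apply: eq_bigr => i _.
  by rewrite /bump /= add1n -addn1 natrD; ring.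
by rewrite -h1 /poch big_ord_recr.
Qed.

Lemma hweight_up Mb (b : 'I_Mb -> K) r Nc (c : 'I_Nc -> K) eta : b r != 0 ->
  forall k, hweight (shift_up b r) c eta k
            = hweight b c eta k + (1 / b r) * (k%:R * hweight b c eta k).
Proof.
move=> hb k; rewrite /hweight.
have hp : \prod_(i < Mb) poch (shift_up b r i) k
          = (\prod_(i < Mb) poch (b i) k) * ((b r + k%:R) / b r).
  rewrite (bigD1 r) //= [in RHS](bigD1 r) //= /shift_up eqxx.
  under eq_bigr => i hi do rewrite (negbTE hi).
  have hp1 : poch (b r + 1) k = poch (b r) k * (b r + k%:R) / b r by rewrite -poch_shift [b r * _]mulrC mulfK.
  by rewrite hp1; ring.
rewrite hp mulrDl divff //; ring.
Qed.

Lemma hweight_down Mb (b : 'I_Mb -> K) Nc (c : 'I_Nc -> K) s eta :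
  c s - 1 != 0 -> (forall j k, poch (c j) k != 0) ->
  (forall j k, poch (shift_down c s j) k != 0) ->
  forall k, hweight b (shift_down c s) eta k
            = hweight b c eta k + (1 / (c s - 1)) * (k%:R * hweight b c eta k).
Proof.
move=> hd hc hc' k; rewrite /hweight.
set A := \prod_(i < Mb) poch (b i) k.
set Pi := \prod_(j < Nc | j != s) poch (c j) k.
have hPi : Pi != 0 by apply/prodf_neq0 => j _; exact: hc.
have e1 : \prod_(j < Nc) poch (shift_down c s j) k = poch (c s - 1) k * Pi.
  rewrite (bigD1 s) //= /shift_down eqxx; congr (_ * _).
  by apply: eq_bigr => i hi; rewrite (negbTE hi).
have e2 : \prod_(j < Nc) poch (c j) k = poch (c s) k * Pi by rewrite (bigD1 s).
have hp' : poch (c s - 1) k != 0 by have := hc' s k; rewrite /shift_down eqxx.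
have hp := hc s k.
have rel0 := poch_shift (c s - 1) k; rewrite subrK in rel0.
have hdk : c s - 1 + k%:R != 0.
  apply/negP => /eqP h0; move: rel0; rewrite h0 mulr0 => /eqP.
  by rewrite mulf_eq0 (negbTE hd) (negbTE hp).
have ep' : poch (c s - 1) k = (c s - 1) * poch (c s) k / (c s - 1 + k%:R).
  by rewrite rel0 mulfK.
rewrite e1 e2 ep'; field.
by rewrite hd hp hPi hdk pnatr_eq0 -lt0n fact_gt0.
Qed.

Lemma moment_shift (w w' : nat -> K) (e : K) :
  (forall k, w' k = w k + e * (k%:R * w k)) ->
  (forall p, cvgn (series (msummand w p))) ->
  forall p, moment w' p = moment w p + e * moment w p.+1.
Proof.
move=> hw hcv p; rewrite /moment.
have -> : msummand w' p = msummand w p + e *: msummand w p.+1.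
  have sc : forall a b : K, a *: b = a * b by [].
  apply: boolp.funext => k; rewrite !fctE /msummand hw exprS sc; ring.
rewrite lim_seriesD //; last exact: is_cvg_seriesZ.
by rewrite lim_seriesZ.
Qed.

Lemma momMat_shift (w1 w1' w2 w2' : nat -> K) (e1 e2 : K) :
  (forall k, w1' k = w1 k + e1 * (k%:R * w1 k)) ->
  (forall k, w2' k = w2 k + e2 * (k%:R * w2 k)) ->
  (forall p, cvgn (series (msummand w1 p))) ->
  (forall p, cvgn (series (msummand w2 p))) ->
  forall k j, momMat w1' w2' k j
     = momMat w1 w2 k j + (if odd j then e2 else e1) * momMat w1 w2 k j.+2.
Proof.
move=> h1 h2 c1 c2 k j; rewrite /momMat /= negbK addnS.
by case: (odd j); apply: moment_shift.
Qed.

End Wt.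

Lemma ger_shift (K : numFieldType) (w1 w2 w1' w2' : nat -> K) S S' H H' (e1 e2 : K) :
  Orth (momMat w1 w2) S H -> Orth (momMat w1' w2') S' H' ->
  (forall p, tau (momMat w1' w2') p != 0) ->
  (forall k, w1' k = w1 k + e1 * (k%:R * w1 k)) ->
  (forall k, w2' k = w2 k + e2 * (k%:R * w2 k)) ->
  (forall p, cvgn (series (msummand w1 p))) ->
  (forall p, cvgn (series (msummand w2 p))) ->
  forall m, crel S S' (fun m => (if odd m.-2 then e2 else e1) * (H m / H' m.-2)) m.+2.
Proof.
move=> O O' t h1 h2 c1 c2.
exact: (geronimus (e := fun j => if odd j then e2 else e1) O O' t (momMat_shift h1 h2 c1 c2)).
Qed.

Lemma close1 (K : numFieldType) (a b c d s : K) : a = b -> c - d = s * (a - b) -> c = d.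
Proof. by move=> E1 E2; apply/eqP; rewrite -subr_eq0 E2 E1 subrr mulr0. Qed.

Lemma triv_w (K : numFieldType) (w : nat -> K) : forall k, w k = w k + 0 * (k%:R * w k).
Proof. by move=> k; rewrite mul0r addr0. Qed.

Unset Implicit Arguments.
Set Strict Implicit.
Set Printing Implicit Defensive.

Theorem mainTheorem2 (K : numFieldType) (N M1 M2 : nat)
  (b1 : 'I_M1 -> K) (b2 : 'I_M2 -> K) (c : 'I_N -> K) (eta1 eta2 : K)
  (r : 'I_M1) (q : 'I_M2) (s : 'I_N)
  (S St : bool -> bool -> bool -> nat -> nat -> K)
  (H : bool -> bool -> bool -> nat -> K) :
  (forall x y z : bool, ~~ [&& x, y & z] ->
     let B1 := if x then shift_up b1 r else b1 in
     let B2 := if y then shift_up b2 q else b2 in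
     let C := if z then shift_down c s else c in
     admissible B1 B2 C eta1 eta2 /\
     GaussBorel (momMat (hweight B1 C eta1) (hweight B2 C eta2))
                (S x y z) (H x y z) (St x y z)) ->
  b1 r != 0 -> b2 q != 0 -> c s - 1 != 0 ->
  let dh := b1 r in let dc := b2 q in let dt := c s - 1 in
  let u x y z n := H x y z (2 * n)%N in
  let v x y z n := H x y z (2 * n + 1)%N in
  let f x y z n := S x y z (2 * n + 1)%N (2 * n)%N in
  let g x y z n := S x y z (2 * n + 2)%N (2 * n + 1)%N in
  let o := false in let i := true in
  forall n : nat,
  (* (1) hat, tilde, bar *)
  [/\ g o o o n * (f o o i n - f i o o n) + g o o i n * (f i o i n - f o o i n)
        + g i o o n * (f i o o n - f i o i n)
      = 1 / dt * (u i o o n.+1 / u i o i n - u o o o n.+1 / u o o i n)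
        + 1 / dh * (u o o o n.+1 / u i o o n - u o o i n.+1 / u i o i n),
      f o o o n.+1 * (g i o o n - g o o i n) + f o o i n.+1 * (g o o i n - g i o i n)
        + f i o o n.+1 * (g i o i n - g i o o n)
      = 1 / dt * (v o o o n.+1 / v o o i n - v i o o n.+1 / v i o i n),
      1 / dt * (u i o o n.+1 / u i o i n) * (f i o o n.+1 - f o o o n.+1)
        + 1 / dh * (u o o i n.+1 / u i o i n) * (f o o o n.+1 - f o o i n.+1)
        + 1 / dt * (v o o o n.+1 / v o o i n) * (f o o i n - f i o i n) = 0 &
      1 / dh * (u o o o n.+2 / u i o o n.+1) * (g i o o n - g i o i n)
        + 1 / dt * (u o o o n.+2 / u o o i n.+1) * (g i o i n - g o o i n)
        + 1 / dt * (v i o o n.+1 / v i o i n) * (g o o o n.+1 - g i o o n.+1) = 0]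
  /\
  (* (2) check, tilde, bar *)
  [/\ g o o o n * (f o o i n - f o i o n) + g o o i n * (f o i i n - f o o i n)
        + g o i o n * (f o i o n - f o i i n)
      = 1 / dt * (u o i o n.+1 / u o i i n - u o o o n.+1 / u o o i n),
      f o o o n.+1 * (g o o i n - g o i o n) + f o o i n.+1 * (g o i i n - g o o i n)
        + f o i o n.+1 * (g o i o n - g o i i n)
      = 1 / dt * (v o i o n.+1 / v o i i n - v o o o n.+1 / v o o i n)
        + 1 / dc * (v o o o n.+1 / v o i o n - v o o i n.+1 / v o i i n),
      1 / dt * (u o i o n.+1 / u o i i n) * (f o o o n.+1 - f o i o n.+1)
        + 1 / dc * (v o o o n.+1 / v o i o n) * (f o i o n - f o i i n)
        + 1 / dt * (v o o o n.+1 / v o o i n) * (f o i i n - f o o i n) = 0 &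
      1 / dt * (u o o o n.+2 / u o o i n.+1) * (g o o i n - g o i i n)
        + 1 / dc * (v o o i n.+1 / v o i i n) * (g o o o n.+1 - g o o i n.+1)
        + 1 / dt * (v o i o n.+1 / v o i i n) * (g o i o n.+1 - g o o o n.+1) = 0]
  /\
  (* (3) hat, check, bar *)
  [/\ 1 / dh * (u o i o n.+1 / u i i o n) * (f o o o n.+1 - f o i o n.+1)
        + 1 / dc * (v o o o n.+1 / v o i o n) * (f o i o n - f i i o n) = 0,
      1 / dh * (u o o o n.+2 / u i o o n.+1) * (g i i o n - g i o o n)
        + 1 / dc * (v i o o n.+1 / v i i o n) * (g i o o n.+1 - g o o o n.+1) = 0,
      g o o o n * (f o i o n - f i o o n) + g o i o n * (f i i o n - f o i o n)
        + g i o o n * (f i o o n - f i i o n)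
      = 1 / dh * (u o o o n.+1 / u i o o n - u o i o n.+1 / u i i o n) &
      f o o o n.+1 * (g o i o n - g i o o n) + f o i o n.+1 * (g i i o n - g o i o n)
        + f i o o n.+1 * (g i o o n - g i i o n)
      = 1 / dc * (v i o o n.+1 / v i i o n - v o o o n.+1 / v o i o n)].
Proof.
move=> hyp hb1 hb2 hc dh dc dt u v f g o i n.
have [[P000 C1000 C2000 T000] G000] := hyp false false false isT.
have [[P001 C1001 C2001 T001] G001] := hyp false false true isT.
have [[P010 C1010 C2010 T010] G010] := hyp false true false isT.
have [[P011 C1011 C2011 T011] G011] := hyp false true true isT.
have [[P100 C1100 C2100 T100] G100] := hyp true false false isT.
have [[P101 C1101 C2101 T101] G101] := hyp true false true isT.
have [[P110 C1110 C2110 T110] G110] := hyp true true false isT.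
have O000 := GB_orth G000; have O001 := GB_orth G001; have O010 := GB_orth G010.
have O011 := GB_orth G011; have O100 := GB_orth G100; have O101 := GB_orth G101.
have O110 := GB_orth G110.
simpl in *.
have RT000 := ger_shift O000 O001 T001 (hweight_down b1 eta1 hc P000 P001)
   (hweight_down b2 eta2 hc P000 P001) C1000 C2000.
have RT100 := ger_shift O100 O101 T101 (hweight_down (shift_up b1 r) eta1 hc P100 P101)
   (hweight_down b2 eta2 hc P100 P101) C1100 C2100.
have RT010 := ger_shift O010 O011 T011 (hweight_down b1 eta1 hc P010 P011)
   (hweight_down (shift_up b2 q) eta2 hc P010 P011) C1010 C2010.
have RH000 := ger_shift O000 O100 T100 (hweight_up c eta1 hb1) (triv_w _) C1000 C2000.
have RH001 := ger_shift O001 O101 T101 (hweight_up (shift_down c s) eta1 hb1) (triv_w _) C1001 C2001.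
have RH010 := ger_shift O010 O110 T110 (hweight_up c eta1 hb1) (triv_w _) C1010 C2010.
have RC000 := ger_shift O000 O010 T010 (triv_w _) (hweight_up c eta2 hb2) C1000 C2000.
have RC001 := ger_shift O001 O011 T011 (triv_w _) (hweight_up (shift_down c s) eta2 hb2) C1001 C2001.
have RC100 := ger_shift O100 O110 T110 (triv_w _) (hweight_up c eta2 hb2) C1100 C2100.
rewrite /u /v /f /g /o /i /dh /dc /dt.
have e1 : (2 * n.+1 = (2*n).+2)%N by lia.
have e2 : (2 * n.+2 = (2*n).+4)%N by lia.
rewrite !e1 !e2 !addn1 !addn2.
have om : odd (2*n) = false by rewrite mul2n odd_double.
move: om; generalize (2*n)%N => m om.
have L000 := O000.1; have L001 := O001.1; have L010 := O010.1; have L011 := O011.1.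
have L100 := O100.1; have L101 := O101.1; have L110 := O110.1.
split; [|split]; split.
- have K1 := k2 L001 L100 L101 (RT000 m) (RH001 m) (RH000 m) (RT100 m).
  rewrite /xd /= ?om /= in K1; first [ by apply: (close1 (s:=1) K1); ring | by apply: (close1 (s:=-1) K1); ring ].
- have K1 := k2 L001 L100 L101 (RT000 m.+1) (RH001 m.+1) (RH000 m.+1) (RT100 m.+1).
  rewrite /xd /= ?om /= in K1; first [ by apply: (close1 (s:=1) K1); ring | by apply: (close1 (s:=-1) K1); ring ].
- have K1 := k3 L001 L100 L101 (RT000 m.+1) (RH001 m.+1) (RH000 m.+1) (RT100 m.+1) (RH001 m) (RT100 m).
  rewrite /xd /= ?om /= in K1; first [ by apply: (close1 (s:=1) K1); ring | by apply: (close1 (s:=-1) K1); ring ].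
- have K1 := k3 L001 L100 L101 (RT000 m.+2) (RH001 m.+2) (RH000 m.+2) (RT100 m.+2) (RH001 m.+1) (RT100 m.+1).
  rewrite /xd /= ?om /= in K1; first [ by apply: (close1 (s:=1) K1); ring | by apply: (close1 (s:=-1) K1); ring ].
- have K1 := k2 L001 L010 L011 (RT000 m) (RC001 m) (RC000 m) (RT010 m).
  rewrite /xd /= ?om /= in K1; first [ by apply: (close1 (s:=1) K1); ring | by apply: (close1 (s:=-1) K1); ring ].
- have K1 := k2 L001 L010 L011 (RT000 m.+1) (RC001 m.+1) (RC000 m.+1) (RT010 m.+1).
  rewrite /xd /= ?om /= in K1; first [ by apply: (close1 (s:=1) K1); ring | by apply: (close1 (s:=-1) K1); ring ].
- have K1 := k3 L001 L010 L011 (RT000 m.+1) (RC001 m.+1) (RC000 m.+1) (RT010 m.+1) (RC001 m) (RT010 m).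
  rewrite /xd /= ?om /= in K1; first [ by apply: (close1 (s:=1) K1); ring | by apply: (close1 (s:=-1) K1); ring ].
- have K1 := k3 L001 L010 L011 (RT000 m.+2) (RC001 m.+2) (RC000 m.+2) (RT010 m.+2) (RC001 m.+1) (RT010 m.+1).
  rewrite /xd /= ?om /= in K1; first [ by apply: (close1 (s:=1) K1); ring | by apply: (close1 (s:=-1) K1); ring ].
- have K1 := k3 L100 L010 L110 (RH000 m.+1) (RC100 m.+1) (RC000 m.+1) (RH010 m.+1) (RC100 m) (RH010 m).
  rewrite /xd /= ?om /= in K1; first [ by apply: (close1 (s:=1) K1); ring | by apply: (close1 (s:=-1) K1); ring ].
- have K1 := k3 L100 L010 L110 (RH000 m.+2) (RC100 m.+2) (RC000 m.+2) (RH010 m.+2) (RC100 m.+1) (RH010 m.+1).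
  rewrite /xd /= ?om /= in K1; first [ by apply: (close1 (s:=1) K1); ring | by apply: (close1 (s:=-1) K1); ring ].
- have K1 := k2 L100 L010 L110 (RH000 m) (RC100 m) (RC000 m) (RH010 m).
  rewrite /xd /= ?om /= in K1; first [ by apply: (close1 (s:=1) K1); ring | by apply: (close1 (s:=-1) K1); ring ].
- have K1 := k2 L100 L010 L110 (RH000 m.+1) (RC100 m.+1) (RC000 m.+1) (RH010 m.+1).
  rewrite /xd /= ?om /= in K1; first [ by apply: (close1 (s:=1) K1); ring | by apply: (close1 (s:=-1) K1); ring ].
Qed.
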